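(* Safe squares are closed under finite products and coproducts: if, for $i=1,2$, the commuting squares with $p_i:Z_i\to X_i$, $f_i:X_i\to W_i$, $q_i:Z_i\to Y_i$, $g_i:Y_i\to W_i$ (with $f_i\circ p_i=g_i\circ q_i$) are safe squares, then the square with $p_1\times p_2$, $f_1\times f_2$, $q_1\times q_2$, $g_1\times g_2$ is a safe square, and likewise the square with $p_1+p_2$, $f_1+f_2$, $q_1+q_2$, $g_1+g_2$ is a safe square.
   Context: Nominal sets over a countably infinite set $\mathcal V$ of names; products with coordinatewise action, coproducts as disjoint unions. For an equivariant $f:X\to Y$: $u$ is $f$-safe if $|\mathsf{supp}(u)|=\max\{|\mathsf{supp}(v)|:v\in f^{-1}(f(u))\}$; $\mathsf{bv}_f(u)=\mathsf{supp}(u)\setminus\mathsf{supp}(f(u))$; for finite $S$, $S\#v$ means $S\cap\mathsf{supp}(v)=\emptyset$. A commuting square $p:Z\to X$, $f:X\to W$, $q:Z\to Y$, $g:Y\to W$ ($f\circ p=g\circ q$) is a safe square if for every $f$-safe $u\in X$ and $v\in Y$ with $f(u)=g(v)$ and $\mathsf{bv}_f(u)\#v$ there is a $q$-safe $z\in Z$ with $p(z)=u$ and $q(z)=v$. *)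

(* Defs.v *)
(* Nominal sets over the countably infinite set of names V := nat. *)
From Stdlib Require Import Arith Lia List.
Import ListNotations.
Set Implicit Arguments.

Record fperm := FPerm {
  pf : nat -> nat;
  pinv : nat -> nat;
  pK : forall n, pinv (pf n) = n;
  pKV : forall n, pf (pinv n) = n;
  pbound : exists N, forall n, N <= n -> pf n = n }.

Definition fperm_id : fperm.
Proof.
  refine (FPerm (fun n => n) (fun n => n) (fun n => eq_refl) (fun n => eq_refl) _).
  exists 0; auto.
Defined.

Definition fperm_comp (p q : fperm) : fperm.
Proof.
  refine (FPerm (fun n => pf p (pf q n)) (fun n => pinv q (pinv p n)) _ _ _).
  - intro n; rewrite pK, pK; reflexivity.
  - intro n; rewrite pKV, pKV; reflexivity.
  - destruct (pbound p) as [N1 H1]; destruct (pbound q) as [N2 H2].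
    exists (N1 + N2); intros n Hn. rewrite H2 by lia. apply H1; lia.
Defined.

Definition supports {T : Type} (act : fperm -> T -> T) (S : list nat) (x : T) : Prop :=
  forall p : fperm, (forall a, In a S -> pf p a = a) -> act p x = x.

Record nominal := Nominal {
  carrier :> Type;
  act : fperm -> carrier -> carrier;
  act_ext : forall p q x, (forall n, pf p n = pf q n) -> act p x = act q x;
  act_id : forall x, act fperm_id x = x;
  act_comp : forall p q x, act (fperm_comp p q) x = act p (act q x);
  fin_supp : forall x, exists S, supports act S x }.

Arguments act {n} p x : rename.
Arguments fin_supp {n} x : rename.
Arguments act_id {n} x : rename.
Arguments act_comp {n} p q x : rename.
Arguments act_ext {n} p q x _ : rename.

(* a belongs to supp(x), the least finite support of x. *)
Definition in_supp {X : nominal} (x : X) (a : nat) : Prop :=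
  forall S, supports (@act X) S x -> In a S.

Definition supp_card {X : nominal} (x : X) (k : nat) : Prop :=
  exists l : list nat, NoDup l /\ (forall a, In a l <-> in_supp x a) /\ length l = k.

Definition equivariant {X Y : nominal} (f : X -> Y) : Prop :=
  forall p x, f (act p x) = act p (f x).

(* u is f-safe: |supp u| is the maximum of |supp v| over v in the fibre of f(u)
   (u itself lies in that fibre, so this says |supp v| <= |supp u| for all such v). *)
Definition f_safe {X W : nominal} (f : X -> W) (u : X) : Prop :=
  forall v : X, f v = f u ->
  forall m n, supp_card v m -> supp_card u n -> m <= n.

Definition bv_fresh {X W Y : nominal} (f : X -> W) (u : X) (v : Y) : Prop :=
  forall a, in_supp u a -> ~ in_supp (f u) a -> ~ in_supp v a.

Definition safe_square {Z X Y W : nominal}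
  (p : Z -> X) (f : X -> W) (q : Z -> Y) (g : Y -> W) : Prop :=
  equivariant p /\ equivariant f /\ equivariant q /\ equivariant g /\
  (forall z, f (p z) = g (q z)) /\
  (forall (u : X) (v : Y), f_safe f u -> f u = g v -> bv_fresh f u v ->
     exists z : Z, f_safe q z /\ p z = u /\ q z = v).

Definition prod_act (X Y : nominal) (p : fperm) (z : X * Y) : X * Y :=
  (act p (fst z), act p (snd z)).

Definition nprod (X Y : nominal) : nominal.
Proof.
  refine (@Nominal (X * Y)%type (prod_act X Y) _ _ _ _).
  - intros p q [x y] H; unfold prod_act; simpl; f_equal; apply act_ext; auto.
  - intros [x y]; unfold prod_act; simpl; rewrite !act_id; reflexivity.
  - intros p q [x y]; unfold prod_act; simpl; rewrite !act_comp; reflexivity.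
  - intros [x y]. destruct (fin_supp x) as [S1 H1]; destruct (fin_supp y) as [S2 H2].
    exists (S1 ++ S2); intros p Hp; unfold prod_act; simpl; f_equal.
    + apply H1; intros a Ha; apply Hp, in_or_app; auto.
    + apply H2; intros a Ha; apply Hp, in_or_app; auto.
Defined.

Definition sum_act (X Y : nominal) (p : fperm) (z : X + Y) : X + Y :=
  match z with inl x => inl (act p x) | inr y => inr (act p y) end.

Definition nsum (X Y : nominal) : nominal.
Proof.
  refine (@Nominal (X + Y)%type (sum_act X Y) _ _ _ _).
  - intros p q [x|y] H; simpl; f_equal; apply act_ext; auto.
  - intros [x|y]; simpl; rewrite act_id; reflexivity.
  - intros p q [x|y]; simpl; rewrite act_comp; reflexivity.
  - intros [x|y].
    + destruct (fin_supp x) as [S H]; exists S; intros p Hp; simpl; f_equal; auto.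
    + destruct (fin_supp y) as [S H]; exists S; intros p Hp; simpl; f_equal; auto.
Defined.

Definition prod_map {X1 X2 Y1 Y2 : nominal} (f1 : X1 -> Y1) (f2 : X2 -> Y2)
  : nprod X1 X2 -> nprod Y1 Y2 := fun z => (f1 (fst z), f2 (snd z)).

Definition sum_map {X1 X2 Y1 Y2 : nominal} (f1 : X1 -> Y1) (f2 : X2 -> Y2)
  : nsum X1 X2 -> nsum Y1 Y2 :=
  fun z => match z with inl x => inl (f1 x) | inr y => inr (f2 y) end.

(* Main.v *)
Require Import Defs.
From Stdlib Require Import Arith Lia List Classical ClassicalEpsilon.
Import ListNotations.

Definition decP (P : nat -> Prop) (a : nat) : bool :=
  if excluded_middle_informative (P a) then true else false.
Definition flt (P : nat -> Prop) (l : list nat) := filter (decP P) (nodup Nat.eq_dec l).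
Definition cnt (P : nat -> Prop) (l : list nat) := length (flt P l).

Lemma flt_spec P l a : In a (flt P l) <-> In a l /\ P a.
Proof.
  unfold flt. rewrite filter_In, nodup_In. unfold decP.
  destruct (excluded_middle_informative (P a)); intuition congruence.
Qed.

Lemma flt_nodup P l : NoDup (flt P l).
Proof. apply NoDup_filter, NoDup_nodup. Qed.

Lemma cnt_le (P Q : nat -> Prop) l l' :
  (forall a, In a l -> P a -> In a l' /\ Q a) -> cnt P l <= cnt Q l'.
Proof.
  intros H. apply NoDup_incl_length; [apply flt_nodup|].
  intros a Ha. apply flt_spec in Ha. apply flt_spec. apply H; tauto.
Qed.

Lemma cnt_lt (P Q : nat -> Prop) l l' b :
  (forall a, In a l -> P a -> In a l' /\ Q a) -> In b l' -> Q b -> ~ (In b l /\ P b) ->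
  cnt P l < cnt Q l'.
Proof.
  intros H Hb Qb Nb. unfold cnt.
  change (length (b :: flt P l) <= length (flt Q l')).
  apply NoDup_incl_length.
  - constructor; [rewrite flt_spec; auto | apply flt_nodup].
  - intros a [<-|Ha]; apply flt_spec; [auto|]. apply flt_spec in Ha; apply H; tauto.
Qed.

Lemma cnt_disj (A B : nat -> Prop) l :
  (forall a, A a -> B a -> False) -> cnt (fun a => A a \/ B a) l = cnt A l + cnt B l.
Proof.
  intros D. unfold cnt. rewrite <- length_app. apply Nat.le_antisymm.
  - apply NoDup_incl_length; [apply flt_nodup|].
    intros a Ha; apply flt_spec in Ha; apply in_or_app.
    destruct Ha as [Hl [HA|HB]]; [left|right]; apply flt_spec; auto.
  - apply NoDup_incl_length.
    + apply NoDup_app; try apply flt_nodup.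
      intros a Ha Hb; apply flt_spec in Ha; apply flt_spec in Hb; apply (D a); tauto.
    + intros a Ha; apply in_app_or in Ha; apply flt_spec.
      destruct Ha as [Ha|Ha]; apply flt_spec in Ha; tauto.
Qed.

Lemma cnt_ext (P Q : nat -> Prop) l l' :
  (forall a, P a <-> Q a) -> (forall a, P a -> In a l) -> (forall a, P a -> In a l') ->
  cnt P l = cnt Q l'.
Proof.
  intros E H1 H2. apply Nat.le_antisymm; apply cnt_le; intros a _ Ha.
  - split; [apply H2|apply E]; auto.
  - apply E in Ha. split; auto.
Qed.

Lemma fresh_ex (l : list nat) : exists b, ~ In b l.
Proof.
  exists (S (fold_right Nat.max 0 l)).
  assert (forall a, In a l -> a <= fold_right Nat.max 0 l).
  { induction l; simpl; intros a' H; [contradiction|].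
    destruct H as [<-|H]; [lia|]. apply IHl in H. lia. }
  intros Hin; apply H in Hin; lia.
Qed.

Definition sw (a b n : nat) : nat :=
  if Nat.eq_dec n a then b else if Nat.eq_dec n b then a else n.

Lemma sw_inv a b n : sw a b (sw a b n) = n.
Proof.
  unfold sw. destruct (Nat.eq_dec n a); destruct (Nat.eq_dec n b);
  repeat (destruct Nat.eq_dec); subst; congruence.
Qed.

Definition fswap (a b : nat) : fperm.
Proof.
  refine (FPerm (sw a b) (sw a b) (sw_inv a b) (sw_inv a b) _).
  exists (S (a + b)). intros n Hn. unfold sw.
  destruct (Nat.eq_dec n a); [lia|]. destruct (Nat.eq_dec n b); [lia|]. reflexivity.
Defined.

Definition finv (p : fperm) : fperm.
Proof.
  refine (FPerm (pinv p) (pf p) (pKV p) (pK p) _).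
  destruct (pbound p) as [N HN]. exists N. intros n Hn.
  rewrite <- (HN n Hn) at 1. apply pK.
Defined.

Section Nom.
Variable X : nominal.

Lemma act_invK (p : fperm) (x : X) : act (finv p) (act p x) = x.
Proof.
  rewrite <- act_comp. rewrite <- (act_id x) at 2. apply act_ext.
  intros n; simpl. apply pK.
Qed.

Lemma act_Kinv (p : fperm) (x : X) : act p (act (finv p) x) = x.
Proof.
  rewrite <- act_comp. rewrite <- (act_id x) at 2. apply act_ext.
  intros n; simpl. apply pKV.
Qed.

Lemma supports_act (p : fperm) (S : list nat) (x : X) :
  supports (@act X) S x -> supports (@act X) (map (pf p) S) (act p x).
Proof.
  intros HS r Hr.
  set (q := fperm_comp (finv p) (fperm_comp r p)).
  assert (Hq : act q x = x).
  { apply HS. intros a Ha. simpl.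
    rewrite Hr by (apply in_map; auto). apply pK. }
  rewrite <- act_comp. rewrite <- Hq at 2. rewrite <- act_comp.
  apply act_ext. intros n; simpl. rewrite pKV. reflexivity.
Qed.

Lemma in_supp_act (p : fperm) (x : X) c :
  in_supp (act p x) c <-> in_supp x (pinv p c).
Proof.
  split.
  - intros H S HS. apply supports_act with (p := p) in HS.
    apply H in HS. apply in_map_iff in HS. destruct HS as [s [<- Hs]].
    rewrite pK; auto.
  - intros H S HS. apply supports_act with (p := finv p) in HS.
    rewrite act_invK in HS. apply H in HS. apply in_map_iff in HS.
    destruct HS as [s [Hs Hin]]. simpl in Hs.
    assert (s = c) by (rewrite <- (pKV p s), <- (pKV p c); congruence). subst; auto.
Qed.

Lemma NoDup_map_inj (f : nat -> nat) l :
  (forall x y, f x = f y -> x = y) -> NoDup l -> NoDup (map f l).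
Proof.
  intros Hf; induction 1; simpl; constructor; auto.
  intros Hin; apply in_map_iff in Hin; destruct Hin as [y [Hy Hin]].
  apply Hf in Hy; subst; auto.
Qed.

Lemma supp_card_act (p : fperm) (x : X) m :
  supp_card x m -> supp_card (act p x) m.
Proof.
  intros [l [Hn [Hl Hlen]]]. exists (map (pf p) l). split; [|split].
  - apply NoDup_map_inj; auto. intros a b E. rewrite <- (pK p a), <- (pK p b); congruence.
  - intros a. rewrite in_supp_act, in_map_iff. split.
    + intros [s [<- Hs]]. rewrite pK. apply Hl; auto.
    + intros H. exists (pinv p a). rewrite pKV. split; auto. apply Hl; auto.
  - rewrite length_map; auto.
Qed.

Lemma supp_card_cnt (x : X) m l :
  supp_card x m -> (forall a, in_supp x a -> In a l) -> m = cnt (in_supp x) l.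
Proof.
  intros [k [Hn [Hk Hlen]]] Hl. subst m. apply Nat.le_antisymm.
  - apply NoDup_incl_length; auto. intros a Ha. apply flt_spec. apply Hk in Ha; auto.
  - apply NoDup_incl_length; [apply flt_nodup|]. intros a Ha. apply flt_spec in Ha.
    apply Hk; tauto.
Qed.

Lemma cnt_supp_card (x : X) l :
  (forall a, in_supp x a -> In a l) -> supp_card x (cnt (in_supp x) l).
Proof.
  intros Hl. exists (flt (in_supp x) l). split; [apply flt_nodup|split; auto].
  intros a; rewrite flt_spec; intuition.
Qed.

Lemma supp_fin (x : X) : exists l, forall a, in_supp x a -> In a l.
Proof. destruct (fin_supp x) as [S HS]. exists S. intros a H; apply H; auto. Qed.

Lemma not_in_supp (x : X) a : ~ in_supp x a -> exists S, supports (@act X) S x /\ ~ In a S.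
Proof.
  intros H. apply not_all_ex_not in H. destruct H as [S HS].
  exists S. tauto.
Qed.

Lemma supports_fix (S : list nat) (x : X) a b :
  supports (@act X) S x -> ~ In a S -> ~ In b S -> act (fswap a b) x = x.
Proof.
  intros HS Ha Hb. apply HS. intros c Hc. simpl. unfold sw.
  destruct (Nat.eq_dec c a); [subst; contradiction|].
  destruct (Nat.eq_dec c b); [subst; contradiction|]. auto.
Qed.
End Nom.

Lemma equiv_supp {X Y : nominal} (f : X -> Y) (Hf : equivariant f) x a :
  in_supp (f x) a -> in_supp x a.
Proof.
  intros H S HS. apply H. intros p Hp. rewrite <- Hf. f_equal. apply HS; auto.
Qed.

Lemma pair_supp (X Y : nominal) (x : X) (y : Y) a :
  @in_supp (nprod X Y) (x, y) a <-> in_supp x a \/ in_supp y a.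
Proof.
  split.
  - intros H. apply NNPP. intros Hn. apply not_or_and in Hn. destruct Hn as [H1 H2].
    apply not_in_supp in H1; apply not_in_supp in H2.
    destruct H1 as [S1 [HS1 N1]]; destruct H2 as [S2 [HS2 N2]].
    assert (In a (S1 ++ S2)).
    { apply H. intros p Hp. simpl. unfold prod_act; simpl. f_equal.
      - apply HS1; intros; apply Hp, in_or_app; auto.
      - apply HS2; intros; apply Hp, in_or_app; auto. }
    apply in_app_or in H0; tauto.
  - intros [H|H] S HS; apply H; intros p Hp; specialize (HS p Hp);
    simpl in HS; unfold prod_act in HS; simpl in HS; congruence.
Qed.

Lemma inl_supp (X Y : nominal) (x : X) a :
  @in_supp (nsum X Y) (inl x) a <-> in_supp x a.
Proof.
  split; intros H S HS; apply H; intros p Hp; specialize (HS p Hp); simpl in *;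
  congruence.
Qed.

Lemma inr_supp (X Y : nominal) (y : Y) a :
  @in_supp (nsum X Y) (inr y) a <-> in_supp y a.
Proof.
  split; intros H S HS; apply H; intros p Hp; specialize (HS p Hp); simpl in *;
  congruence.
Qed.

Lemma rename (X Y : nominal) (h : X -> Y) (Hh : equivariant h) (L : list nat) :
  forall K (x : X),
  (forall c, In c L -> in_supp x c -> ~ in_supp (h x) c -> In c K) ->
  exists p : fperm, h (act p x) = h x /\
    (forall c, in_supp (act p x) c -> In c L -> in_supp (h x) c).
Proof.
  induction K as [|k K IH]; intros x HK.
  - exists fperm_id. rewrite act_id. split; auto.
    intros c Hc HL. apply NNPP; intros N. apply (HK c HL Hc N).
  - destruct (classic (in_supp x k /\ ~ in_supp (h x) k)) as [[Hk Nk]|Hk].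
    + destruct (not_in_supp _ _ _ Nk) as [T [HT NT]].
      destruct (supp_fin _ x) as [Sx HSx].
      destruct (fresh_ex (k :: L ++ T ++ Sx)) as [b Hb].
      assert (bk : b <> k) by (intro; apply Hb; left; auto).
      assert (bL : ~ In b L) by (intro; apply Hb; right; apply in_or_app; auto).
      assert (bT : ~ In b T) by (intro; apply Hb; right; apply in_or_app; right; apply in_or_app; auto).
      assert (bS : ~ In b Sx) by (intro; apply Hb; right; apply in_or_app; right; apply in_or_app; auto).
      set (x1 := act (fswap k b) x).
      assert (E1 : h x1 = h x).
      { unfold x1. rewrite Hh. eapply supports_fix; eauto. }
      destruct (IH x1) as [p [Hp1 Hp2]].
      { intros c HcL Hc Nc. rewrite E1 in Nc. unfold x1 in Hc.
        rewrite in_supp_act in Hc. simpl in Hc. unfold sw in Hc.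
        destruct (Nat.eq_dec c k).
        - subst. apply HSx in Hc. contradiction.
        - destruct (Nat.eq_dec c b); [subst; contradiction|].
          destruct (HK c HcL Hc Nc) as [->|]; [contradiction|auto]. }
      exists (fperm_comp p (fswap k b)). rewrite act_comp. fold x1.
      rewrite Hp1, E1. split; auto. intros c Hc HL. rewrite <- E1. auto.
    + destruct (IH x) as [p Hp]; [|exists p; auto].
      intros c HcL Hc Nc. destruct (HK c HcL Hc Nc) as [->|]; auto.
      exfalso; apply Hk; auto.
Qed.

Lemma cnt_split (A B : nat -> Prop) l :
  (forall a, A a \/ B a -> In a l) ->
  cnt (fun a => A a \/ B a) l = cnt A l + cnt (fun a => B a /\ ~ A a) l.
Proof.
  intros H. rewrite <- cnt_disj by tauto. apply cnt_ext.
  - intros a. split; [|tauto]. intros [HA|HB]; [auto|]. destruct (classic (A a)); tauto.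
  - auto.
  - intros a Ha. apply H. tauto.
Qed.

Lemma cnt_same (P : nat -> Prop) l l' :
  (forall a, P a -> In a l) -> (forall a, P a -> In a l') -> cnt P l = cnt P l'.
Proof. intros; apply cnt_ext; auto; tauto. Qed.

Lemma core_U (X W : nominal) (f : X -> W) (Hf : equivariant f) (u : X)
  (B : nat -> Prop) (lB : list nat) (HB : forall a, B a -> In a lB)
  (Hs : forall v, f v = f u -> forall l, (forall a, in_supp v a -> In a l) ->
     (forall a, in_supp u a -> In a l) -> (forall a, B a -> In a l) ->
     cnt (fun a => in_supp v a \/ B a) l <= cnt (fun a => in_supp u a \/ B a) l) :
  f_safe f u /\ (forall a, in_supp u a -> ~ in_supp (f u) a -> ~ B a).
Proof.
  assert (K : forall v, f v = f u -> forall l, (forall a, in_supp v a -> In a l) ->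
     (forall a, in_supp u a -> In a l) -> (forall a, B a -> In a l) ->
     cnt (in_supp v) l + cnt (fun a => B a /\ ~ in_supp (f u) a) l <=
     cnt (in_supp u) l + cnt (fun a => B a /\ ~ in_supp u a) l).
  { intros v Ev l Hv Hu Hl.
    destruct (rename X W f Hf lB lB v) as [p [Ep Hp]]; [auto|].
    set (v' := act p v) in *.
    destruct (supp_fin _ v') as [lv' Hlv'].
    set (l' := l ++ lv').
    assert (Il : forall a, In a l -> In a l') by (intros; apply in_or_app; auto).
    specialize (Hs v' (eq_trans Ep Ev) l').
    rewrite !cnt_split in Hs.
    2:{ intros a [H|H]; [apply Il, Hu; auto|apply Il, Hl; auto]. }
    2:{ intros a [H|H]; [apply in_or_app; right; auto|apply Il, Hl; auto]. }
    assert (C1 : cnt (in_supp v') l' = cnt (in_supp v) l).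
    { symmetry. eapply supp_card_cnt; [|intros; apply in_or_app; right; auto].
      apply supp_card_act. apply cnt_supp_card; auto. }
    assert (C2 : cnt (fun a => B a /\ ~ in_supp (f u) a) l <=
                 cnt (fun a => B a /\ ~ in_supp v' a) l').
    { apply cnt_le. intros a Ha [HBa Na]. split; [auto|split; auto].
      intros Hv'. apply Na. rewrite <- Ev. apply Hp; auto. }
    assert (C3 : cnt (in_supp u) l' = cnt (in_supp u) l).
    { apply cnt_same; auto. }
    assert (C4 : cnt (fun a => B a /\ ~ in_supp u a) l' =
                 cnt (fun a => B a /\ ~ in_supp u a) l).
    { apply cnt_same; [intros a [Ha _]|intros a [Ha _]]; auto. }
    assert (P1 : forall a, in_supp v' a -> In a l') by (intros; apply in_or_app; right; auto).
    assert (P2 : forall a, in_supp u a -> In a l') by auto.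
    assert (P3 : forall a, B a -> In a l') by auto.
    specialize (Hs P1 P2 P3). lia. }
  split.
  - intros v Ev m n Hm Hn.
    destruct (supp_fin _ v) as [lv Hlv]; destruct (supp_fin _ u) as [lu Hlu].
    set (l := lv ++ lu ++ lB).
    assert (I1 : forall a, in_supp v a -> In a l) by (intros; apply in_or_app; auto).
    assert (I2 : forall a, in_supp u a -> In a l)
      by (intros; apply in_or_app; right; apply in_or_app; auto).
    assert (I3 : forall a, B a -> In a l)
      by (intros; apply in_or_app; right; apply in_or_app; auto).
    rewrite (supp_card_cnt _ v m l Hm I1), (supp_card_cnt _ u n l Hn I2).
    specialize (K v Ev l I1 I2 I3).
    assert (cnt (fun a => B a /\ ~ in_supp u a) l <=
            cnt (fun a => B a /\ ~ in_supp (f u) a) l).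
    { apply cnt_le. intros a Ha [HBa Na]. split; auto. split; auto.
      intros H; apply Na; eapply equiv_supp; eauto. }
    lia.
  - intros a Ha Na HBa.
    destruct (supp_fin _ u) as [lu Hlu].
    set (l := lu ++ lB).
    assert (I2 : forall a, in_supp u a -> In a l) by (intros; apply in_or_app; auto).
    assert (I3 : forall a, B a -> In a l) by (intros; apply in_or_app; auto).
    specialize (K u eq_refl l I2 I2 I3).
    assert (cnt (fun a => B a /\ ~ in_supp u a) l <
            cnt (fun a => B a /\ ~ in_supp (f u) a) l).
    { apply cnt_lt with (b := a); auto.
      - intros c Hc [HBc Nc]. split; auto. split; auto.
        intros H; apply Nc; eapply equiv_supp; eauto.
      - tauto. }
    lia.
Qed.

Ltac incl_tac := intros ? ?;
  repeat match goal with H : _ /\ _ |- _ => destruct H | H : _ \/ _ |- _ => destruct H end;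
  auto.

Lemma cnt_union_le (A B : nat -> Prop) l :
  (forall a, A a \/ B a -> In a l) ->
  cnt (fun a => A a \/ B a) l <= cnt A l + cnt B l.
Proof.
  intros H. rewrite cnt_split by auto.
  assert (cnt (fun a => B a /\ ~ A a) l <= cnt B l) by (apply cnt_le; tauto). lia.
Qed.

Lemma cnt_sub_split (A B : nat -> Prop) l :
  (forall a, A a -> B a) -> (forall a, B a -> In a l) ->
  cnt B l = cnt A l + cnt (fun a => B a /\ ~ A a) l.
Proof.
  intros HAB HB. rewrite <- cnt_split.
  - apply cnt_ext.
    + intros a; split; [tauto|]. intros [H|H]; auto.
    + auto.
    + auto.
  - intros a [H|H]; auto.
Qed.

Lemma prod_equiv {X1 X2 Y1 Y2 : nominal} (f1 : X1 -> Y1) (f2 : X2 -> Y2) :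
  equivariant f1 -> equivariant f2 -> equivariant (prod_map f1 f2).
Proof.
  intros H1 H2 p [x y]. cbn. unfold prod_map, prod_act; cbn. rewrite H1, H2; auto.
Qed.

Lemma sum_equiv {X1 X2 Y1 Y2 : nominal} (f1 : X1 -> Y1) (f2 : X2 -> Y2) :
  equivariant f1 -> equivariant f2 -> equivariant (sum_map f1 f2).
Proof.
  intros H1 H2 p [x|y]; cbn; f_equal; auto.
Qed.

Lemma pair_cnt (X Y : nominal) (x : X) (y : Y) l :
  (forall a, in_supp x a -> In a l) -> (forall a, in_supp y a -> In a l) ->
  cnt (@in_supp (nprod X Y) (x, y)) l = cnt (fun a => in_supp x a \/ in_supp y a) l.
Proof.
  intros Hx Hy. apply cnt_ext.
  - intros a; apply pair_supp.
  - intros a Ha; apply pair_supp in Ha; destruct Ha; auto.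
  - intros a Ha; apply pair_supp in Ha; destruct Ha; auto.
Qed.

Lemma pair_card (X Y : nominal) (x : X) (y : Y) l :
  (forall a, in_supp x a -> In a l) -> (forall a, in_supp y a -> In a l) ->
  @supp_card (nprod X Y) (x, y) (cnt (fun a => in_supp x a \/ in_supp y a) l).
Proof.
  intros Hx Hy. rewrite <- pair_cnt by auto. apply cnt_supp_card.
  intros a Ha; apply pair_supp in Ha; destruct Ha; auto.
Qed.

Lemma prod_safe_cmp {X1 X2 W1 W2 : nominal} (f1 : X1 -> W1) (f2 : X2 -> W2)
  (u1 : X1) (u2 : X2) (Hs : f_safe (prod_map f1 f2) (u1, u2))
  (w1 : X1) (w2 : X2) (E1 : f1 w1 = f1 u1) (E2 : f2 w2 = f2 u2) l :
  (forall a, in_supp w1 a -> In a l) -> (forall a, in_supp w2 a -> In a l) ->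
  (forall a, in_supp u1 a -> In a l) -> (forall a, in_supp u2 a -> In a l) ->
  cnt (fun a => in_supp w1 a \/ in_supp w2 a) l <= cnt (fun a => in_supp u1 a \/ in_supp u2 a) l.
Proof.
  intros. apply (Hs (w1, w2)).
  - unfold prod_map; cbn; rewrite E1, E2; auto.
  - apply pair_card; auto.
  - apply pair_card; auto.
Qed.

Lemma prod_safe_z {Z1 Z2 Y1 Y2 : nominal} (q1 : Z1 -> Y1) (q2 : Z2 -> Y2)
  (Hq1 : equivariant q1) (Hq2 : equivariant q2) (z1 : Z1) (z2 : Z2)
  (S1 : f_safe q1 z1) (S2 : f_safe q2 z2)
  (D1 : forall c, in_supp z1 c -> ~ in_supp (q1 z1) c -> ~ in_supp (q2 z2) c)
  (D2 : forall c, in_supp z2 c -> ~ in_supp (q2 z2) c -> ~ in_supp (q1 z1) c)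
  (D3 : forall c, in_supp z1 c -> ~ in_supp (q1 z1) c -> in_supp z2 c -> ~ in_supp (q2 z2) c -> False) :
  f_safe (prod_map q1 q2) (z1, z2).
Proof.
  intros [w1 w2] Ew m n Hm Hn. unfold prod_map in Ew; cbn in Ew.
  injection Ew as Ew1 Ew2.
  set (v1 := q1 z1) in *. set (v2 := q2 z2) in *.
  destruct (supp_fin _ w1) as [lw1 Hw1]. destruct (supp_fin _ w2) as [lw2 Hw2].
  destruct (supp_fin _ z1) as [lz1 Hz1]. destruct (supp_fin _ z2) as [lz2 Hz2].
  set (l := lw1 ++ lw2 ++ lz1 ++ lz2).
  assert (Iw1 : forall a, in_supp w1 a -> In a l) by (intros; apply in_or_app; auto).
  assert (Iw2 : forall a, in_supp w2 a -> In a l)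
    by (intros; apply in_or_app; right; apply in_or_app; auto).
  assert (Iz1 : forall a, in_supp z1 a -> In a l)
    by (intros; apply in_or_app; right; apply in_or_app; right; apply in_or_app; auto).
  assert (Iz2 : forall a, in_supp z2 a -> In a l)
    by (intros; apply in_or_app; right; apply in_or_app; right; apply in_or_app; auto).
  assert (vz1 : forall a, in_supp v1 a -> in_supp z1 a) by (intros; eapply equiv_supp; eauto).
  assert (vz2 : forall a, in_supp v2 a -> in_supp z2 a) by (intros; eapply equiv_supp; eauto).
  assert (vw1 : forall a, in_supp v1 a -> in_supp w1 a)
    by (intros a Ha; rewrite <- Ew1 in Ha; eapply equiv_supp; eauto).
  assert (vw2 : forall a, in_supp v2 a -> in_supp w2 a)
    by (intros a Ha; rewrite <- Ew2 in Ha; eapply equiv_supp; eauto).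
  assert (Iv1 : forall a, in_supp v1 a -> In a l) by auto.
  assert (Iv2 : forall a, in_supp v2 a -> In a l) by auto.
  pose proof (supp_card_cnt _ _ _ l Hm) as Em.
  rewrite pair_cnt in Em by auto. specialize (Em ltac:(intros a Ha; apply pair_supp in Ha; destruct Ha; auto)).
  pose proof (supp_card_cnt _ _ _ l Hn) as En.
  rewrite pair_cnt in En by auto. specialize (En ltac:(intros a Ha; apply pair_supp in Ha; destruct Ha; auto)).
  subst m n.
  set (V := fun a => in_supp v1 a \/ in_supp v2 a).
  set (A1 := fun a => in_supp w1 a /\ ~ in_supp v1 a).
  set (A2 := fun a => in_supp w2 a /\ ~ in_supp v2 a).
  set (B1 := fun a => in_supp z1 a /\ ~ in_supp v1 a).
  set (B2 := fun a => in_supp z2 a /\ ~ in_supp v2 a).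
  assert (M1 : cnt (fun a => in_supp w1 a \/ in_supp w2 a) l <=
               cnt (fun a => V a \/ (A1 a \/ A2 a)) l).
  { apply cnt_le. intros a Ha H; split; auto. unfold V, A1, A2.
    destruct (classic (in_supp v1 a)); destruct (classic (in_supp v2 a)); tauto. }
  assert (M2 : cnt (fun a => V a \/ (A1 a \/ A2 a)) l <= cnt V l + (cnt A1 l + cnt A2 l)).
  { eapply Nat.le_trans; [apply cnt_union_le|].
    - unfold V, A1, A2; incl_tac.
    - apply Nat.add_le_mono_l. apply cnt_union_le. unfold A1, A2; incl_tac. }
  assert (W1 : cnt (in_supp w1) l = cnt (in_supp v1) l + cnt A1 l)
    by (apply cnt_sub_split; auto).
  assert (W2 : cnt (in_supp w2) l = cnt (in_supp v2) l + cnt A2 l)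
    by (apply cnt_sub_split; auto).
  assert (Z1e : cnt (in_supp z1) l = cnt (in_supp v1) l + cnt B1 l)
    by (apply cnt_sub_split; auto).
  assert (Z2e : cnt (in_supp z2) l = cnt (in_supp v2) l + cnt B2 l)
    by (apply cnt_sub_split; auto).
  assert (L1 : cnt (in_supp w1) l <= cnt (in_supp z1) l).
  { apply (S1 w1 Ew1); apply cnt_supp_card; auto. }
  assert (L2 : cnt (in_supp w2) l <= cnt (in_supp z2) l).
  { apply (S2 w2 Ew2); apply cnt_supp_card; auto. }
  assert (N1 : cnt (fun a => in_supp z1 a \/ in_supp z2 a) l =
               cnt (fun a => V a \/ (B1 a \/ B2 a)) l).
  { apply cnt_ext.
    - intros a; unfold V, B1, B2. split.
      + intros H. destruct (classic (in_supp v1 a)); destruct (classic (in_supp v2 a)); tauto.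
      + intros [[H|H]|[[H _]|[H _]]]; auto.
    - incl_tac.
    - unfold V, B1, B2; incl_tac. }
  assert (N2 : cnt (fun a => V a \/ (B1 a \/ B2 a)) l = cnt V l + (cnt B1 l + cnt B2 l)).
  { rewrite cnt_disj, cnt_disj; auto.
    - unfold B1, B2. intros a [Ha Na] [Hb Nb]. eapply D3; eauto.
    - unfold V, B1, B2. intros a [H|H] [[Hb Nb]|[Hb Nb]]; try tauto.
      + apply (D2 a Hb Nb H).
      + apply (D1 a Hb Nb H). }
  lia.
Qed.

Lemma card_inl (X Y : nominal) (x : X) m :
  @supp_card (nsum X Y) (inl x) m <-> supp_card x m.
Proof.
  split; intros [l [H1 [H2 H3]]]; exists l; split; auto; split; auto;
  intros a; rewrite (H2 a); [|symmetry]; apply inl_supp.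
Qed.

Lemma card_inr (X Y : nominal) (x : Y) m :
  @supp_card (nsum X Y) (inr x) m <-> supp_card x m.
Proof.
  split; intros [l [H1 [H2 H3]]]; exists l; split; auto; split; auto;
  intros a; rewrite (H2 a); [|symmetry]; apply inr_supp.
Qed.

Lemma safe_inl {X1 X2 W1 W2 : nominal} (f1 : X1 -> W1) (f2 : X2 -> W2) u :
  f_safe (sum_map f1 f2) (inl u) <-> f_safe f1 u.
Proof.
  split.
  - intros H v E m n Hm Hn. apply (H (inl v)); [cbn; congruence| apply card_inl; auto | apply card_inl; auto].
  - intros H [v|v] E m n Hm Hn; cbn in E; [|discriminate].
    injection E as E. apply card_inl in Hm; apply card_inl in Hn. eauto.
Qed.

Lemma safe_inr {X1 X2 W1 W2 : nominal} (f1 : X1 -> W1) (f2 : X2 -> W2) u :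
  f_safe (sum_map f1 f2) (inr u) <-> f_safe f2 u.
Proof.
  split.
  - intros H v E m n Hm Hn. apply (H (inr v)); [cbn; congruence| apply card_inr; auto | apply card_inr; auto].
  - intros H [v|v] E m n Hm Hn; cbn in E; [discriminate|].
    injection E as E. apply card_inr in Hm; apply card_inr in Hn. eauto.
Qed.

Lemma sum_square (Z1 X1 Y1 W1 Z2 X2 Y2 W2 : nominal)
  (p1 : Z1 -> X1) (f1 : X1 -> W1) (q1 : Z1 -> Y1) (g1 : Y1 -> W1)
  (p2 : Z2 -> X2) (f2 : X2 -> W2) (q2 : Z2 -> Y2) (g2 : Y2 -> W2)
  (H1 : safe_square p1 f1 q1 g1) (H2 : safe_square p2 f2 q2 g2) :
  safe_square (sum_map p1 p2) (sum_map f1 f2) (sum_map q1 q2) (sum_map g1 g2).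
Proof.
  destruct H1 as [Ep1 [Ef1 [Eq1 [Eg1 [C1 S1]]]]].
  destruct H2 as [Ep2 [Ef2 [Eq2 [Eg2 [C2 S2]]]]].
  split; [apply sum_equiv; auto|].
  split; [apply sum_equiv; auto|].
  split; [apply sum_equiv; auto|].
  split; [apply sum_equiv; auto|].
  split; [intros [z|z]; cbn; f_equal; auto|].
  intros [u|u] [v|v] Hs E Hb; cbn in E; try discriminate; injection E as E.
  - apply safe_inl in Hs.
    destruct (S1 u v Hs E) as [z [Hz [Pz Qz]]].
    + intros a Ha Na Hv. apply (Hb a).
      * apply (proj2 (inl_supp _ _ _ _)); auto.
      * intro H; apply Na; apply (proj1 (inl_supp _ _ _ _) H).
      * apply (proj2 (inl_supp _ _ _ _)); auto.
    + exists (inl z). split; [apply safe_inl; auto|]. cbn; split; congruence.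
  - apply safe_inr in Hs.
    destruct (S2 u v Hs E) as [z [Hz [Pz Qz]]].
    + intros a Ha Na Hv. apply (Hb a).
      * apply (proj2 (inr_supp _ _ _ _)); auto.
      * intro H; apply Na; apply (proj1 (inr_supp _ _ _ _) H).
      * apply (proj2 (inr_supp _ _ _ _)); auto.
    + exists (inr z). split; [apply safe_inr; auto|]. cbn; split; congruence.
Qed.

Lemma pair_equiv {Z X Y : nominal} (p : Z -> X) (q : Z -> Y) :
  equivariant p -> equivariant q -> @equivariant Z (nprod X Y) (fun z => (p z, q z)).
Proof. intros Hp Hq r z. cbn. unfold prod_act; cbn. rewrite Hp, Hq; auto. Qed.

Lemma prod_square (Z1 X1 Y1 W1 Z2 X2 Y2 W2 : nominal)
  (p1 : Z1 -> X1) (f1 : X1 -> W1) (q1 : Z1 -> Y1) (g1 : Y1 -> W1)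
  (p2 : Z2 -> X2) (f2 : X2 -> W2) (q2 : Z2 -> Y2) (g2 : Y2 -> W2)
  (H1 : safe_square p1 f1 q1 g1) (H2 : safe_square p2 f2 q2 g2) :
  safe_square (prod_map p1 p2) (prod_map f1 f2) (prod_map q1 q2) (prod_map g1 g2).
Proof.
  destruct H1 as [Ep1 [Ef1 [Eq1 [Eg1 [C1 S1]]]]].
  destruct H2 as [Ep2 [Ef2 [Eq2 [Eg2 [C2 S2]]]]].
  split; [apply prod_equiv; auto|].
  split; [apply prod_equiv; auto|].
  split; [apply prod_equiv; auto|].
  split; [apply prod_equiv; auto|].
  split; [intros [z1 z2]; unfold prod_map; cbn; rewrite C1, C2; auto|].
  intros [u1 u2] [v1 v2] Hs E Hb. unfold prod_map in E; cbn in E.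
  injection E as E1 E2.
  assert (Hb' : forall a, (in_supp u1 a \/ in_supp u2 a) ->
            ~ (in_supp (f1 u1) a \/ in_supp (f2 u2) a) -> ~ in_supp v1 a /\ ~ in_supp v2 a).
  { unfold bv_fresh in Hb. intros a Ha Na. split; intro Hv; refine (Hb a _ _ _).
    1,4: apply (proj2 (pair_supp _ _ u1 u2 a)); auto.
    1,3: intro H; apply Na; apply (proj1 (pair_supp W1 W2 (f1 u1) (f2 u2) a) H).
    all: apply (proj2 (pair_supp _ _ v1 v2 a)); auto. }
  destruct (supp_fin _ u1) as [lu1 Hlu1]. destruct (supp_fin _ u2) as [lu2 Hlu2].
  destruct (supp_fin _ v1) as [lv1 Hlv1]. destruct (supp_fin _ v2) as [lv2 Hlv2].
  destruct (core_U X1 W1 f1 Ef1 u1 (in_supp u2) lu2 Hlu2) as [Sf1 U1].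
  { intros v Ev l Hv Hu HB. apply (prod_safe_cmp f1 f2 u1 u2 Hs v u2 Ev eq_refl l); auto. }
  destruct (core_U X2 W2 f2 Ef2 u2 (in_supp u1) lu1 Hlu1) as [Sf2 U2].
  { intros v Ev l Hv Hu HB.
    assert (Hc := prod_safe_cmp f1 f2 u1 u2 Hs u1 v eq_refl Ev l HB Hv HB Hu).
    rewrite (cnt_ext (fun a => in_supp v a \/ in_supp u1 a) (fun a => in_supp u1 a \/ in_supp v a) l l).
    rewrite (cnt_ext (fun a => in_supp u2 a \/ in_supp u1 a) (fun a => in_supp u1 a \/ in_supp u2 a) l l).
    auto.
    all: try (intros a; tauto).
    all: intros a [H|H]; auto. }
  assert (F1 : forall a, in_supp (f1 u1) a -> in_supp v1 a)
    by (intros a H; rewrite E1 in H; eapply equiv_supp; eauto).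
  assert (F2 : forall a, in_supp (f2 u2) a -> in_supp v2 a)
    by (intros a H; rewrite E2 in H; eapply equiv_supp; eauto).
  assert (B1 : forall a, in_supp u1 a -> ~ in_supp (f1 u1) a -> ~ in_supp v1 a /\ ~ in_supp v2 a).
  { intros a Ha Na. apply Hb'; [auto|]. intros [H|H]; [auto|].
    apply (U1 a Ha Na). eapply equiv_supp; eauto. }
  assert (B2 : forall a, in_supp u2 a -> ~ in_supp (f2 u2) a -> ~ in_supp v1 a /\ ~ in_supp v2 a).
  { intros a Ha Na. apply Hb'; [auto|]. intros [H|H]; [|auto].
    apply (U2 a Ha Na). eapply equiv_supp; eauto. }
  destruct (S1 u1 v1 Sf1 E1) as [z1 [Hz1 [Pz1 Qz1]]].
  { intros a Ha Na. apply B1; auto. }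
  destruct (S2 u2 v2 Sf2 E2) as [z2 [Hz2 [Pz2 Qz2]]].
  { intros a Ha Na. apply B2; auto. }
  destruct (rename Z1 (nprod X1 Y1) (fun z => (p1 z, q1 z)) (pair_equiv p1 q1 Ep1 Eq1)
              (lu2 ++ lv2) (lu2 ++ lv2) z1) as [r1 [Er1 Hr1]]; [auto|].
  injection Er1 as Pr1 Qr1. rewrite Pz1 in Pr1. rewrite Qz1 in Qr1.
  set (z1' := act r1 z1) in *.
  assert (R1 : forall c, in_supp z1' c -> In c (lu2 ++ lv2) -> in_supp u1 c \/ in_supp v1 c).
  { intros c Hc Hl. specialize (Hr1 c Hc Hl).
    change (@in_supp (nprod X1 Y1) (p1 z1, q1 z1) c) in Hr1.
    rewrite pair_supp, Pz1, Qz1 in Hr1. auto. }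
  destruct (supp_fin _ z1') as [lz1 Hlz1].
  destruct (rename Z2 (nprod X2 Y2) (fun z => (p2 z, q2 z)) (pair_equiv p2 q2 Ep2 Eq2)
              (lz1 ++ lv1) (lz1 ++ lv1) z2) as [r2 [Er2 Hr2]]; [auto|].
  injection Er2 as Pr2 Qr2. rewrite Pz2 in Pr2. rewrite Qz2 in Qr2.
  set (z2' := act r2 z2) in *.
  assert (R2 : forall c, in_supp z2' c -> In c (lz1 ++ lv1) -> in_supp u2 c \/ in_supp v2 c).
  { intros c Hc Hl. specialize (Hr2 c Hc Hl).
    change (@in_supp (nprod X2 Y2) (p2 z2, q2 z2) c) in Hr2.
    rewrite pair_supp, Pz2, Qz2 in Hr2. auto. }
  exists (z1', z2'). split; [|unfold prod_map; cbn; split; congruence].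
  assert (Hz1' : f_safe q1 z1').
  { intros w Ew m n Hm Hn. rewrite Qr1, <- Qz1 in Ew.
    apply (Hz1 w Ew m n Hm).
    rewrite <- (act_invK _ r1 z1). apply supp_card_act. auto. }
  assert (Hz2' : f_safe q2 z2').
  { intros w Ew m n Hm Hn. rewrite Qr2, <- Qz2 in Ew.
    apply (Hz2 w Ew m n Hm).
    rewrite <- (act_invK _ r2 z2). apply supp_card_act. auto. }
  apply prod_safe_z; auto; rewrite Qr1, Qr2.
  - intros c Hc Nc Hv2.
    destruct (R1 c Hc) as [Hu|Hv]; [apply in_or_app; right; auto| |contradiction].
    assert (Nf : ~ in_supp (f1 u1) c) by auto.
    destruct (B1 c Hu Nf); auto.
  - intros c Hc Nc Hv1.
    destruct (R2 c Hc) as [Hu|Hv]; [apply in_or_app; right; auto| |contradiction].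
    assert (Nf : ~ in_supp (f2 u2) c) by auto.
    destruct (B2 c Hu Nf); auto.
  - intros c Hc1 Nc1 Hc2 Nc2.
    destruct (R2 c Hc2) as [Hu2|Hv]; [apply in_or_app; left; auto| |contradiction].
    destruct (R1 c Hc1) as [Hu1|Hv]; [apply in_or_app; left; auto| |contradiction].
    assert (Nf : ~ in_supp (f1 u1) c) by auto.
    apply (U1 c Hu1 Nf Hu2).
Qed.

Theorem lemma5p37
  (Z1 X1 Y1 W1 Z2 X2 Y2 W2 : nominal)
  (p1 : Z1 -> X1) (f1 : X1 -> W1) (q1 : Z1 -> Y1) (g1 : Y1 -> W1)
  (p2 : Z2 -> X2) (f2 : X2 -> W2) (q2 : Z2 -> Y2) (g2 : Y2 -> W2)
  (H1 : safe_square p1 f1 q1 g1) (H2 : safe_square p2 f2 q2 g2) :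
  safe_square (prod_map p1 p2) (prod_map f1 f2) (prod_map q1 q2) (prod_map g1 g2) /\
  safe_square (sum_map p1 p2) (sum_map f1 f2) (sum_map q1 q2) (sum_map g1 g2).
Proof.
  split; [apply prod_square | apply sum_square]; auto.
Qed.
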